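(* Let $X$ be a real Banach space with a normalized Schauder basis $\mathcal B=(e_n)_{n=1}^\infty$ with biorthogonal functionals $(e_n^* )$, let $\mathcal E=(\varepsilon_n)_{n=1}^\infty$ be a sequence of nonnegative numbers, and let $K=K_{\mathcal B,\mathcal E}$. If $r^{\rm ext}(K)<\infty$, then $\|x\|\le r^{\rm ext}(K)$ for every $x\in K$.
   Context: The brick is $K_{\mathcal B,\mathcal E}=\{x\in X:\ |e_n^*(x)|\le\varepsilon_n \text{ for all } n\}$. A point $x_0\in A$ is an extreme point of $A$ if for every nonzero $x\in X$ there is $\lambda\in[-1,1]$ with $x_0+\lambda x\notin A$. The extreme radius $r^{\rm ext}(K)$ is the supremum of $\|x_0\|$ over extreme points $x_0$ of $K$ if an extreme point exists, and $\infty$ otherwise. *)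

(* Defs.v *)
From HB Require Import structures.
From mathcomp Require Import all_boot all_order all_algebra.
From mathcomp Require Import all_classical all_reals all_analysis.
Set Implicit Arguments. Unset Strict Implicit. Unset Printing Implicit Defensive.
Import Order.TTheory GRing.Theory Num.Theory.
Import numFieldNormedType.Exports.
Local Open Scope classical_set_scope.
Local Open Scope ring_scope.

Definition psum (R : realType) (X : normedModType R)
  (a : nat -> R) (e : nat -> X) : nat -> X :=
  fun N => \sum_(0 <= n < N) a n *: e n.

Definition schauder_basis (R : realType) (X : normedModType R) (e : nat -> X) :=
  forall x : X, exists! a : nat -> R, psum a e @ \oo --> x.

Definition normalized (R : realType) (X : normedModType R) (e : nat -> X) :=
  forall n, `|e n| = 1.

Definition biorthogonal_functionals (R : realType) (X : normedModType R)
  (e : nat -> X) (estar : nat -> X -> R) :=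
  forall x : X, psum (fun n => estar n x) e @ \oo --> x.

Definition brick (R : realType) (X : normedModType R)
  (estar : nat -> X -> R) (eps : nat -> R) : set X :=
  [set x | forall n, `|estar n x| <= eps n].

Definition extreme_point (R : realType) (X : normedModType R)
  (A : set X) (x0 : X) :=
  A x0 /\ forall x : X, x != 0 ->
    exists2 l : R, -1 <= l <= 1 & ~ A (x0 + l *: x).

Definition ext_radius (R : realType) (X : normedModType R) (A : set X) : \bar R :=
  if pselect (exists x0, extreme_point A x0)
  then ereal_sup [set (`|x0|)%:E | x0 in extreme_point A]
  else +oo%E.

(* Main.v *)
Require Import Defs.
From HB Require Import structures.
From mathcomp Require Import all_boot all_order all_algebra.
From mathcomp Require Import all_classical all_reals all_analysis.
From mathcomp Require Import lra ring.
Import Order.TTheory GRing.Theory Num.Theory.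
Import numFieldNormedType.Exports.
Local Open Scope classical_set_scope.
Local Open Scope ring_scope.

Lemma coefE (R : realType) (X : normedModType R) (e : nat -> X)
  (estar : nat -> X -> R) (b : nat -> R) (y : X) :
  schauder_basis e -> biorthogonal_functionals e estar ->
  psum b e @ \oo --> y -> forall n, estar n y = b n.
Proof.
move=> Hs Hb Hy n; have [a [_ Ha]] := Hs y.
have E1 : a = b := Ha _ Hy.
have E2 : a = (fun n => estar n y) := Ha _ (Hb y).
by rewrite -E1 E2.
Qed.

Lemma coef_lin (R : realType) (X : normedModType R) (e : nat -> X)
  (estar : nat -> X -> R) (u v : X) (c : R) :
  schauder_basis e -> biorthogonal_functionals e estar ->
  forall n, estar n (u + c *: v) = estar n u + c * estar n v.
Proof.
move=> Hs Hb; apply: (@coefE _ _ e estar (fun k => estar k u + c * estar k v) _ Hs Hb).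
have -> : psum (fun k => estar k u + c * estar k v) e =
  psum (fun k => estar k u) e + c \*: psum (fun k => estar k v) e.
  apply/funext => N; rewrite /psum /=.
  change (\sum_(0 <= n < N) (estar n u + c * estar n v) *: e n = \sum_(0 <= n < N) estar n u *: e n + c *: \sum_(0 <= n < N) estar n v *: e n).
  rewrite scaler_sumr -big_split /=.
  by apply: eq_bigr => i _; rewrite scalerDl scalerA.
by apply: cvgD; [exact: Hb | apply: cvgZr; exact: Hb].
Qed.

Lemma psum_delta (R : realType) (X : normedModType R) (e : nat -> X) m N :
  psum (fun k => (k == m)%:R) e N = if (m < N)%N then e m else 0.
Proof.
elim: N => [|N IH]; first by rewrite /psum big_geq.
rewrite /psum big_nat_recr //= -/(psum _ e N) IH.
case: (ltngtP m N) => [h|h|->].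
- by rewrite (ltn_trans h (ltnSn N)) scale0r addr0.
- by rewrite ltnS leqNgt h /= scale0r addr0.
- by rewrite ltnSn scale1r add0r.
Qed.

Lemma coef_e (R : realType) (X : normedModType R) (e : nat -> X)
  (estar : nat -> X -> R) :
  schauder_basis e -> biorthogonal_functionals e estar ->
  forall n m, estar n (e m) = (n == m)%:R.
Proof.
move=> Hs Hb n m; apply: (@coefE _ _ e estar (fun k => (k == m)%:R) _ Hs Hb).
have H : \forall N \near \oo, (fun _ => e m) N = psum (fun k => (k == m)%:R) e N.
  by exists m.+1 => // N /= hN; rewrite psum_delta hN.
by apply: cvg_trans (near_eq_cvg H) _; exact: cvg_cst.
Qed.

Lemma sign_lem0 (R : realDomainType) (a c : R) : 0 <= a * c -> c != 0 ->
  `|a| < `|a + c|.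
Proof.
move=> hac hc.
have [ha|ha] := leP 0 a; have [hc'|hc'] := ltP 0 c.
- rewrite !ger0_norm //; [lra | lra].
- have hc2 : c < 0 by rewrite lt_neqAle hc hc'.
  have a0 : a = 0 by apply/eqP; rewrite eq_le ha andbT; nra.
  by rewrite a0 normr0 add0r normr_gt0.
- have : a * c < 0 by rewrite nmulr_rlt0.
  by rewrite ltNge hac.
- have hc2 : c < 0 by rewrite lt_neqAle hc hc'.
  rewrite !ltr0_norm //; [lra | lra].
Qed.

Lemma sign_lem (R : realDomainType) (a b : R) : b != 0 ->
  `|a| < `|a + (if 0 <= a * b then 1 else -1) * b|.
Proof.
move=> hb; apply: sign_lem0.
- by case: ifP => h; rewrite ?mul1r // mulN1r mulrN oppr_ge0 leNgt; 
    apply/negP => h2; move: h; rewrite (ltW h2).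
- by case: ifP => _; rewrite ?mul1r // mulN1r oppr_eq0.
Qed.

Lemma psum_split (R : realType) (X : normedModType R) (e : nat -> X)
  (a a0 : nat -> R) (N M : nat) : (N <= M)%N ->
  psum (fun k => if (k < N)%N then a k else a0 k) e M =
  psum a e N + (psum a0 e M - psum a0 e N).
Proof.
move=> hNM; rewrite /psum !(big_cat_nat (leq0n N) hNM) /= [X in _ = _ + X]addrC addKr.
congr (_ + _); last first.
  by apply: eq_big_nat => i /andP[hi _]; rewrite ltnNge hi.
by apply: eq_big_nat => i /andP[_ hi]; rewrite hi.
Qed.

Theorem lemma3p3 (R : realType) (X : completeNormedModType R)
  (e : nat -> X) (estar : nat -> X -> R) (eps : nat -> R) :
  schauder_basis e -> normalized e -> biorthogonal_functionals e estar ->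
  (forall n, 0 <= eps n) ->
  (ext_radius (brick estar eps) < +oo)%E ->
  forall x, brick estar eps x -> ((`|x|)%:E <= ext_radius (brick estar eps))%E.
Proof.
move=> Hs Hn Hb Heps Hfin.
set K := brick estar eps.
have lin := fun u v c => @coef_lin R X e estar u v c Hs Hb.
have ce := @coef_e R X e estar Hs Hb.
have cyc : forall y c N n, estar n (y + c *: e N) =
    if n == N then estar n y + c else estar n y.
  move=> y c N n; rewrite lin ce; case: (n == N); first by rewrite mulr1.
  by rewrite mulr0 addr0.
have ext_sat : forall y, extreme_point K y -> forall n, `|estar n y| = eps n.
  move=> y [Ky Hy] n; apply/eqP; rewrite eq_le Ky /=; rewrite leNgt; apply/negP => hlt.
  set d := eps n - `|estar n y|.
  have d0 : 0 < d by rewrite subr_gt0.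
  have [|l /andP[hl1 hl2]] := Hy (d *: e n).
    by rewrite -normr_eq0 normrZ Hn mulr1 gtr0_norm ?lt0r_neq0.
  apply; move=> m; rewrite scalerA cyc; case: eqP => [->|_]; last exact: Ky.
  rewrite (le_trans (ler_normD _ _)) // normrM (gtr0_norm d0).
  have : `|l| <= 1 by rewrite ler_norml hl1 hl2.
  rewrite /d; nra.
have sat_ext : forall y, (forall n, `|estar n y| = eps n) -> extreme_point K y.
  move=> y Hy; split; first by move=> n; rewrite Hy.
  move=> z z0.
  have [n hn] : exists n, estar n z != 0.
    apply: contrapT => hall; move/eqP: z0; apply.
    have h0 : forall n, estar n z = 0.
      by move=> n; apply/eqP/negPn/negP => h; apply: hall; exists n.
    have := Hb z.
    have -> : psum (fun n => estar n z) e = fun _ => 0.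
      by apply/funext => N; rewrite /psum big1 // => i _; rewrite h0 scale0r.
    by move/cvg_lim => <- //; rewrite lim_cst.
  exists (if 0 <= estar n y * estar n z then 1 else -1).
    by case: ifP => _; rewrite ?lexx ?ler_n1 //=; lra.
  move=> /(_ n); rewrite lin -(Hy n) leNgt; apply/negP/negPn.
  exact: sign_lem.
have ub : forall y, extreme_point K y -> ((`|y|)%:E <= ext_radius K)%E.
  move=> y hy; rewrite /ext_radius; case: pselect => hh; last by rewrite leey.
  by apply: ereal_sup_ubound; exists y.
have [x0 hx0] : exists x0, extreme_point K x0.
  by move: Hfin; rewrite /ext_radius; case: pselect => // hh; rewrite ltxx.
have sat0 := ext_sat _ hx0.
move=> x Kx.
case Er: (ext_radius K) => [r| |]; last 2 first.
- by rewrite leey.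
- by have := ub _ hx0; rewrite Er leeNy_eq.
rewrite lee_fin.
have Hr : forall y, (forall n, `|estar n y| = eps n) -> `|y| <= r.
  by move=> y hy; rewrite -lee_fin -Er; apply: ub; apply: sat_ext.
have P : forall N y, K y -> (forall n, (N <= n)%N -> `|estar n y| = eps n) -> `|y| <= r.
  elim=> [|N IH] y Ky Hy; first by apply: Hr => n; apply: Hy.
  set a := estar N y; set s := eps N.
  have Ha : `|a| <= s := Ky N.
  have [s0|s0] := eqVneq s 0.
    apply: IH => // n; rewrite leq_eqVlt => /orP[/eqP <-|]; last exact: Hy.
    by apply/eqP; rewrite -/a -/s eq_le Ha /= s0 normr_ge0.
  have sp : 0 < s by rewrite lt0r s0 Heps.
  have Hy12 : forall c, `|a + c| = s -> K (y + c *: e N) /\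
      forall n, (N <= n)%N -> `|estar n (y + c *: e N)| = eps n.
    move=> c hc; split.
      move=> n; rewrite cyc; case: eqP => [->|hn]; last exact: Ky.
      by rewrite -/a hc.
    move=> n hNn; rewrite cyc; case: eqP => [->|hn]; first by rewrite -/a hc.
    by apply: Hy; rewrite ltn_neqAle hNn andbT eq_sym; exact/eqP.
  have [K1 S1] : _ := Hy12 (s - a) ltac:(by rewrite addrC subrK gtr0_norm).
  have [K2 S2] : _ := Hy12 (- s - a) ltac:(by rewrite addrC subrK normrN gtr0_norm).
  have n1 := IH _ K1 S1; have n2 := IH _ K2 S2.
  have E : (2 * s) *: y = (a + s) *: (y + (s - a) *: e N) + (s - a) *: (y + (- s - a) *: e N).
    rewrite !scalerDr !scalerA addrACA -!scalerDl.
    have -> : (a + s) * (s - a) + (s - a) * (- s - a) = 0 by ring.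
    by rewrite scale0r addr0; congr (_ *: _); ring.
  have [ha1 ha2] : -s <= a /\ a <= s.
    by move: Ha; rewrite ler_norml => /andP[].
  have : (2 * s) * `|y| <= (2 * s) * r.
    have h2s : 0 <= 2 * s by rewrite mulr_ge0 // ltW.
    rewrite -[X in X * `|y|](ger0_norm h2s) -normrZ E.
    rewrite (le_trans (ler_normD _ _)) // !normrZ.
    have e1 : 0 <= a + s by lra.
    have e2 : 0 <= s - a by lra.
    rewrite (ger0_norm e1) (ger0_norm e2); nra.
  by rewrite ler_pM2l ?mulr_gt0.
pose yN := fun N => psum (fun k => estar k x) e N + (x0 - psum (fun k => estar k x0) e N).
have cN : forall N n, estar n (yN N) = if (n < N)%N then estar n x else estar n x0.
  move=> N n.
  apply: (@coefE _ _ e estar (fun k => if (k < N)%N then estar k x else estar k x0) _ Hs Hb).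
  have H : \forall M \near \oo,
      (fun M => psum (fun k => estar k x) e N + (psum (fun k => estar k x0) e M
         - psum (fun k => estar k x0) e N)) M =
      psum (fun k => if (k < N)%N then estar k x else estar k x0) e M.
    by exists N => // M /= hM; rewrite psum_split.
  apply: cvg_trans (near_eq_cvg H) _.
  apply: cvgD; first exact: cvg_cst.
  by apply: cvgB; [exact: Hb | exact: cvg_cst].
have KN : forall N, K (yN N).
  by move=> N n; rewrite cN; case: ifP => _; [exact: Kx | rewrite sat0].
have boundN : forall N, `|yN N| <= r.
  by move=> N; apply: (P N) => // n hn; rewrite cN ltnNge hn /= sat0.
have cvgy : yN @ \oo --> x.
  have := cvgD (Hb x) (cvgB (cvg_cst x0) (Hb x0)); rewrite subrr addr0.
  by move=> h; exact: h.
have cn : (fun N => `|yN N|) @ \oo --> `|x| by apply: cvg_norm.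
rewrite -(cvg_lim _ cn) //; apply: limr_le; first by apply/cvg_ex; exists `|x|.
exact: nearW.
Qed.
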